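(* Let $\star\in\{\boxtimes,\circ\}$, let $G,H$ be graphs with non-empty edge sets, and let $M_G\subseteq E_G$, $M_H\subseteq E_H$. The following are equivalent: (1) $F_{\ast}(M_G,M_H)$ is a maximum $1$-matching of $G\star H$; (2) $M_G$ is a perfect $1$-matching of $G$ and $M_H$ is a perfect $1$-matching of $H$; (3) $F_{\ast}(M_G,M_H)$ is a perfect $1$-matching of $G\star H$.
   Context: Graphs are finite, simple, undirected. A $1$-matching of $G$ is a set of pairwise vertex-disjoint edges; it is maximum if it has largest cardinality among $1$-matchings of $G$, and perfect if every vertex is incident to one of its edges. Products on $V_G\times V_H$: in $G\boxtimes H$, $(g,h)\sim(g',h')$ iff (i) $\{g,g'\}\in E_G$, $h=h'$; or (ii) $g=g'$, $\{h,h'\}\in E_H$; or (iii) $\{g,g'\}\in E_G$ and $\{h,h'\}\in E_H$; in $G\circ H$ iff $\{g,g'\}\in E_G$ or (ii). $F_{\ast}(M_G,M_H)=\{\{(g,h),(g',h')\}:\{g,g'\}\in M_G,\{h,h'\}\in M_H\}$. *)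

(* Defs.v *)
(* Finite simple undirected graphs are given by a vertex
   finType V and an adjacency relation e : rel V that is symmetric and
   irreflexive; edges are 2-element vertex sets. *)
From mathcomp Require Import all_boot.
Set Implicit Arguments. Unset Strict Implicit. Unset Printing Implicit Defensive.

Section Graphs.
Variable V : finType.

Definition edges (e : rel V) : {set {set V}} :=
  [set [set p.1; p.2] | p : V * V & e p.1 p.2].

Definition matching (e : rel V) (M : {set {set V}}) : Prop :=
  M \subset edges e /\
  (forall a b, a \in M -> b \in M -> a != b -> [disjoint a & b]).

Definition maximum_matching (e : rel V) (M : {set {set V}}) : Prop :=
  matching e M /\ (forall M' : {set {set V}}, matching e M' -> #|M'| <= #|M|).

Definition perfect_matching (e : rel V) (M : {set {set V}}) : Prop :=
  matching e M /\ (forall v : V, exists2 a, a \in M & v \in a).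
End Graphs.

Inductive prod_kind := Strong | Lexico.

Definition prod_rel (k : prod_kind) (VG VH : finType) (eG : rel VG) (eH : rel VH)
  : rel (VG * VH) :=
  fun x y =>
  match k with
  | Strong => [|| eG x.1 y.1 && (x.2 == y.2),
                  (x.1 == y.1) && eH x.2 y.2
                | eG x.1 y.1 && eH x.2 y.2]
  | Lexico => eG x.1 y.1 || ((x.1 == y.1) && eH x.2 y.2)
  end.

Definition Fstar (VG VH : finType) (MG : {set {set VG}}) (MH : {set {set VH}})
  : {set {set VG * VH}} :=
  [set [set (p.1.1, p.2.1); (p.1.2, p.2.2)]
     | p : (VG * VG) * (VH * VH)
     & ([set p.1.1; p.1.2] \in MG) && ([set p.2.1; p.2.2] \in MH)].

(* Main.v *)
Require Import Defs.
From mathcomp Require Import all_boot.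
Set Implicit Arguments. Unset Strict Implicit. Unset Printing Implicit Defensive.
Section Gen.
Variable V : finType.
Variable e : rel V.
Hypothesis sym : symmetric e.
Hypothesis irr : irreflexive e.

Lemma edges_mem x y : e x y -> [set x; y] \in edges e.
Proof. by move=> h; apply/imsetP; exists (x, y); rewrite ?inE. Qed.

Lemma edges_pair A x : A \in edges e -> x \in A -> exists y, A = [set x; y] /\ e x y.
Proof.
case/imsetP=> [[a b]]; rewrite inE /= => eab ->; rewrite !inE => /orP[]/eqP->.
  by exists b.
by exists a; rewrite setUC sym.
Qed.

Lemma edges_card A : A \in edges e -> #|A| = 2.
Proof.
case/imsetP=> [[a b]]; rewrite inE /= => eab ->; rewrite cards2.
by case: eqP eab => // ->; rewrite irr.
Qed.

Lemma match_share M A B x : matching e M -> A \in M -> B \in M -> x \in A -> x \in B -> A = B.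
Proof.
move=> [_ hd] hA hB xA xB; apply/eqP; apply/negPn/negP=> ne.
by move: (disjointFr (hd _ _ hA hB ne) xA); rewrite xB.
Qed.

Lemma match_card M : matching e M -> #|cover M| = 2 * #|M|.
Proof.
move=> [hs hd].
have /trivIsetP/eqP <- : {in M &, forall A B : {set V}, A != B -> [disjoint A & B]}.
  by move=> A B; apply: hd.
rewrite (eq_bigr (fun _ => 2)) ?sum_nat_const 1?mulnC // => A hA.
by apply: edges_card; apply: (subsetP hs).
Qed.

Lemma perfect_max M : perfect_matching e M -> maximum_matching e M.
Proof.
move=> [hm hc]; split=> // M' hm'.
have hT : cover M = setT.
  apply/setP=> v; rewrite inE; case: (hc v) => a ha va.
  by apply/bigcupP; exists a.
have := subset_leq_card (subsetT (cover M')).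
rewrite match_card // -hT match_card //.
by rewrite leq_mul2l.
Qed.

Lemma augment M x y : matching e M -> e x y ->
  (forall A, A \in M -> x \notin A) -> (forall A, A \in M -> y \notin A) ->
  matching e ([set x; y] |: M) /\ #|[set x; y] |: M| = #|M|.+1.
Proof.
move=> [hs hd] exy hx hy.
have nin : [set x; y] \notin M.
  by apply/negP=> h; move: (hx _ h); rewrite !inE eqxx.
split; last by rewrite cardsU1 nin.
split.
  by apply/subsetP=> A; rewrite !inE => /orP[/eqP->|/(subsetP hs)//]; apply: edges_mem.
have dj A : A \in M -> [disjoint [set x; y] & A].
  move=> hA; rewrite disjoint_sym; apply/pred0P=> z /=.
  apply/negP=> /andP[zA]; rewrite !inE => /orP[]/eqP ez; subst z.
    by move: (hx _ hA); rewrite zA.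
  by move: (hy _ hA); rewrite zA.
move=> a b; rewrite !inE => /orP[/eqP->|ha] /orP[/eqP->|hb]; rewrite ?eqxx //.
- by move=> _; apply: dj.
- by move=> _; rewrite disjoint_sym; apply: dj.
- by apply: hd.
Qed.
End Gen.

Lemma pair_eq (T : finType) (x x' y y' : T) :
  [set x; x'] = [set y; y'] -> x = y -> x' = y'.
Proof.
move=> E exy; have : x' \in [set y; y'] by rewrite -E !inE eqxx orbT.
rewrite !inE => /orP[]/eqP // x'y.
have : y' \in [set x; x'] by rewrite E !inE eqxx orbT.
by rewrite !inE => /orP[]/eqP ->; rewrite // exy.
Qed.

Lemma edges_rel (T : finType) (e : rel T) (sym : symmetric e) x y :
  [set x; y] \in edges e -> e x y.
Proof.
case/imsetP=> [[a b]]; rewrite inE /= => eab E.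
have : x \in [set a; b] by rewrite -E !inE eqxx.
rewrite !inE => /orP[]/eqP xa.
  by rewrite (pair_eq E xa) xa.
by rewrite [[set a; b]]setUC in E; rewrite (pair_eq E xa) xa sym.
Qed.

Lemma disj_of_share (T : finType) (A B : {set T}) :
  (forall x, x \in A -> x \in B -> A = B) -> A != B -> [disjoint A & B].
Proof.
move=> h ne; apply/pred0P=> z /=; apply/negP=> /andP[zA zB].
by move: ne; rewrite (h z zA zB) eqxx.
Qed.

Section Prod.
Variables (k : prod_kind) (VG VH : finType) (eG : rel VG) (eH : rel VH).
Hypotheses (symG : symmetric eG) (irrG : irreflexive eG)
  (symH : symmetric eH) (irrH : irreflexive eH).
Variables (MG : {set {set VG}}) (MH : {set {set VH}}).
Hypotheses (sMG : MG \subset edges eG) (sMH : MH \subset edges eH).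
Local Notation P := (prod_rel k eG eH).

Lemma prod_irr : irreflexive P.
Proof. by move=> [g h]; case: k => /=; rewrite irrG irrH !andbF. Qed.

Lemma prod_edge g g' h h' : eG g g' -> eH h h' -> P (g, h) (g', h').
Proof. by move=> e1 e2; case: k => /=; rewrite e1 e2 ?andbT ?orbT. Qed.

Lemma prod_edgeH g h h' : eH h h' -> P (g, h) (g, h').
Proof. by move=> e2; case: k => /=; rewrite e2 eqxx ?andbT ?orbT. Qed.

Lemma prod_edgeG g g' h : eG g g' -> P (g, h) (g', h).
Proof. by move=> e1; case: k => /=; rewrite e1 ?eqxx. Qed.

Lemma F_in g g' h h' : [set g; g'] \in MG -> [set h; h'] \in MH ->
  [set (g, h); (g', h')] \in Fstar MG MH.
Proof. by move=> h1 h2; apply/imsetP; exists ((g, g'), (h, h')); rewrite // inE /= h1 h2. Qed.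

Lemma F_inv A : A \in Fstar MG MH -> exists g g' h h',
  [/\ [set g; g'] \in MG, [set h; h'] \in MH & A = [set (g, h); (g', h')]].
Proof.
case/imsetP=> [[[g g'] [h h']]]; rewrite inE /= => /andP[h1 h2] ->.
by exists g, g', h, h'.
Qed.

Lemma F_inv_at A z : A \in Fstar MG MH -> z \in A -> exists g' h',
  [/\ [set z.1; g'] \in MG, [set z.2; h'] \in MH & A = [set z; (g', h')]].
Proof.
case/F_inv=> [g [g' [h [h' [h1 h2 ->]]]]]; rewrite !inE => /orP[]/eqP->.
  by exists g', h'.
by exists g, h; split => /=; rewrite /= 1?setUC.
Qed.

Lemma F_matching : matching eG MG -> matching eH MH -> matching P (Fstar MG MH).
Proof.
move=> mG mH; split.
  apply/subsetP=> A /F_inv [g [g' [h [h' [h1 h2 ->]]]]].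
  apply: edges_mem; apply: prod_edge; apply: edges_rel => //.
    exact: (subsetP sMG).
  exact: (subsetP sMH).
move=> A B hA hB; apply: disj_of_share => z zA zB.
have [g1 [h1 [a1 b1 ->]]] := F_inv_at hA zA.
have [g2 [h2 [a2 b2 ->]]] := F_inv_at hB zB.
have Eg := match_share mG a1 a2 (setU11 _ _) (setU11 _ _).
have Eh := match_share mH b1 b2 (setU11 _ _) (setU11 _ _).
by rewrite (pair_eq Eg erefl) (pair_eq Eh erefl).
Qed.

Lemma F_matchG h h' : matching P (Fstar MG MH) -> [set h; h'] \in MH ->
  matching eG MG.
Proof.
move=> mF hH; split=> // A B hA hB; apply: disj_of_share => x xA xB.
have hh' : h != h'.
  by apply/negP=> /eqP E; move: (edges_rel symH (subsetP sMH _ hH)); rewrite E irrH.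
have [a [EA _]] := edges_pair symG (subsetP sMG _ hA) xA.
have [b [EB _]] := edges_pair symG (subsetP sMG _ hB) xB.
rewrite EA EB in hA hB *.
have := match_share mF (F_in hA hH) (F_in hB hH) (setU11 _ _) (setU11 _ _).
by move/pair_eq => /(_ erefl) [->].
Qed.

Lemma F_matchH g g' : matching P (Fstar MG MH) -> [set g; g'] \in MG ->
  matching eH MH.
Proof.
move=> mF hG; split=> // A B hA hB; apply: disj_of_share => x xA xB.
have [a [EA _]] := edges_pair symH (subsetP sMH _ hA) xA.
have [b [EB _]] := edges_pair symH (subsetP sMH _ hB) xB.
rewrite EA EB in hA hB *.
have := match_share mF (F_in hG hA) (F_in hG hB) (setU11 _ _) (setU11 _ _).
by move/pair_eq => /(_ erefl) [->].
Qed.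

Lemma F_cover A z : A \in Fstar MG MH -> z \in A ->
  (exists2 a, a \in MG & z.1 \in a) /\ (exists2 b, b \in MH & z.2 \in b).
Proof.
move=> hA zA; have [g' [h' [a1 b1 _]]] := F_inv_at hA zA.
by split; [exists [set z.1; g'] | exists [set z.2; h']]; rewrite // setU11.
Qed.

End Prod.

Theorem mainTheorem19 (k : prod_kind) (VG VH : finType)
  (eG : rel VG) (eH : rel VH)
  (symG : symmetric eG) (irrG : irreflexive eG)
  (symH : symmetric eH) (irrH : irreflexive eH)
  (neG : edges eG != set0) (neH : edges eH != set0)
  (MG : {set {set VG}}) (MH : {set {set VH}})
  (sMG : MG \subset edges eG) (sMH : MH \subset edges eH) :
  (maximum_matching (prod_rel k eG eH) (Fstar MG MH) <->
     perfect_matching eG MG /\ perfect_matching eH MH) /\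
  (perfect_matching eG MG /\ perfect_matching eH MH <->
     perfect_matching (prod_rel k eG eH) (Fstar MG MH)).
Proof.
have [x0 [y0 exy]] : exists x y, eG x y.
  case/set0Pn: neG => A /imsetP [[x y]]; rewrite inE /= => ? _.
  by exists x, y.
have [u0 [v0 euv]] : exists u v, eH u v.
  case/set0Pn: neH => A /imsetP [[x y]]; rewrite inE /= => ? _.
  by exists x, y.
have two_three : perfect_matching eG MG /\ perfect_matching eH MH ->
    perfect_matching (prod_rel k eG eH) (Fstar MG MH).
  move=> [[mG cG] [mH cH]]; split; first exact: F_matching.
  move=> [g h]; have [a aG ga] := cG g; have [b bH hb] := cH h.
  have [g' [Ea _]] := edges_pair symG (subsetP sMG _ aG) ga.
  have [h' [Eb _]] := edges_pair symH (subsetP sMH _ bH) hb.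
  exists [set (g, h); (g', h')]; last by rewrite setU11.
  by apply: F_in; rewrite -?Ea -?Eb.
have F_matchings : matching (prod_rel k eG eH) (Fstar MG MH) ->
    Fstar MG MH != set0 -> matching eG MG /\ matching eH MH.
  move=> mF /set0Pn [A /F_inv [g [g' [h [h' [h1 h2 _]]]]]].
  split; [exact: F_matchG mF h2 | exact: F_matchH mF h1].
split; last first.
  split=> // -[mF cF].
  have [A hA _] := cF (x0, u0).
  have [mG mH] : matching eG MG /\ matching eH MH.
    by apply: F_matchings => //; apply/set0Pn; exists A.
  split; split=> // v.
    have [A' hA' vA'] := cF (v, u0).
    by case: (F_cover hA' vA').
  have [A' hA' vA'] := cF (x0, v).
  by case: (F_cover hA' vA').
split; last first.
  by move=> h; apply: perfect_max; [exact: prod_irr | exact: two_three].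
move=> [mF maxF].
have m0 : matching (prod_rel k eG eH) set0.
  by split; [exact: sub0set | move=> ? ?; rewrite inE].
have [m1 c1] := augment m0 (prod_edge k exy euv) (fun A : {set VG * VH} => fun h : A \in set0 => ltac:(by rewrite inE in h))
   (fun A : {set VG * VH} => fun h : A \in set0 => ltac:(by rewrite inE in h)).
have neF : Fstar MG MH != set0.
  by apply/negP => /eqP E; move: (maxF _ m1); rewrite c1 E cards0.
have [mG mH] := F_matchings mF neF.
case/set0Pn: neF => A0 /F_inv [g [g' [h [h' [h1 h2 _]]]]].
have ehh := edges_rel symH (subsetP sMH _ h2).
have egg := edges_rel symG (subsetP sMG _ h1).
split; split=> // v.
  case: (boolP [exists a in MG, v \in a]) => [/exists_inP[a ? ?]|/exists_inP nE].
    by exists a.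
  have nin w : forall A, A \in Fstar MG MH -> (v, w) \notin A.
    move=> A hA; apply/negP => vA; case: (F_cover hA vA) => [[a ? ?] _].
    by apply: nE; exists a.
  have [m2 c2] := augment mF (prod_edgeH k eG v ehh) (nin h) (nin h').
  by move: (maxF _ m2); rewrite c2 ltnn.
case: (boolP [exists a in MH, v \in a]) => [/exists_inP[a ? ?]|/exists_inP nE].
  by exists a.
have nin w : forall A, A \in Fstar MG MH -> (w, v) \notin A.
  move=> A hA; apply/negP => vA; case: (F_cover hA vA) => [_ [a ? ?]].
  by apply: nE; exists a.
have [m2 c2] := augment mF (prod_edgeG k eH v egg) (nin g) (nin g').
by move: (maxF _ m2); rewrite c2 ltnn.
Qed.
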